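(* For $\alpha\in\mathbb{K}^\times$ let $A_{2,\alpha}$ be the evolution algebra over the field $\mathbb{K}$ with natural basis $\{e_1,e_2\}$ such that $e_1^2=e_2$ and $e_2^2=\alpha e_1$. For $\alpha,\alpha'\in\mathbb{K}^\times$, $A_{2,\alpha}$ is isomorphic to $A_{2,\alpha'}$ as a $\mathbb{K}$-algebra if and only if $\overline\alpha=\overline{\alpha'}$ or $\overline\alpha=\overline{\alpha'}^2$, where classes are taken in $G_3=\mathbb{K}^\times/(\mathbb{K}^\times)^3$.
   Context: An evolution algebra over $\mathbb{K}$ is a $\mathbb{K}$-algebra with a basis $\{e_i\}$ (natural basis) such that $e_ie_j=0$ for $i\neq j$. $\overline\rho$ denotes the class of $\rho\in\mathbb{K}^\times$ in $G_3$. *)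

(* Defs.v *)
From HB Require Import structures.
From mathcomp Require Import all_boot all_order all_algebra.
Set Implicit Arguments. Unset Strict Implicit. Unset Printing Implicit Defensive.
Import GRing.Theory.
Local Open Scope ring_scope.

(* An n-dimensional evolution algebra over K is K^n (row vectors) with natural
   basis e_i (delta row vectors), e_i e_j = 0 for i <> j and
   e_i^2 = \sum_j C i j e_j, where C is the structure matrix. *)
Definition evo_mul (K : fieldType) (n : nat) (C : 'M[K]_n) (u v : 'rV[K]_n)
  : 'rV[K]_n := \row_j \sum_i u 0 i * v 0 i * C i j.

(* Structure matrix of A_{2,alpha}: e_1^2 = e_2, e_2^2 = alpha e_1
   (indices 0,1 stand for e_1,e_2). *)
Definition A2_struct (K : fieldType) (alpha : K) : 'M[K]_2 :=
  \matrix_(i < 2, j < 2)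
    (if (i == 0 :> nat) && (j == 1 :> nat) then 1
     else if (i == 1 :> nat) && (j == 0 :> nat) then alpha else 0).

Definition evo_iso (K : fieldType) (n : nat) (C C' : 'M[K]_n) : Prop :=
  exists f : 'rV[K]_n -> 'rV[K]_n,
    [/\ forall (a : K) (u v : 'rV[K]_n), f (a *: u + v) = a *: f u + f v,
        bijective f &
        forall u v, f (evo_mul C u v) = evo_mul C' (f u) (f v)].

Definition G3_eq (K : fieldType) (a b : K) : Prop :=
  exists c : K, c != 0 /\ a = b * c ^+ 3.

(* Main.v *)
Require Import Defs.
From mathcomp Require Import all_boot all_order all_algebra.
From mathcomp Require Import ring.
Set Implicit Arguments. Unset Strict Implicit. Unset Printing Implicit Defensive.
Import GRing.Theory.
Local Open Scope ring_scope.

Lemma ord2P (j : 'I_2) : j = ord0 \/ j = ord_max.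
Proof. case: j => [[|[|k]] Hj]; [left|right|]; try by apply/val_inj. by []. Qed.

Section S.
Variable K : fieldType.

Lemma em0 (al : K) (u v : 'rV[K]_2) :
  evo_mul (A2_struct al) u v 0 ord0 = al * u 0 ord_max * v 0 ord_max.
Proof. rewrite /evo_mul mxE !big_ord_recl big_ord0 !mxE /=; have -> : lift ord0 ord0 = ord_max :> 'I_2 by apply/val_inj.
  ring. Qed.

Lemma em1 (al : K) (u v : 'rV[K]_2) :
  evo_mul (A2_struct al) u v 0 ord_max = u 0 ord0 * v 0 ord0.
Proof. rewrite /evo_mul mxE !big_ord_recl big_ord0 !mxE /=; have -> : lift ord0 ord0 = ord_max :> 'I_2 by apply/val_inj.
  ring. Qed.

Definition vec (x y : K) : 'rV[K]_2 := \row_j (if j == ord0 then x else y).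

Lemma vec0 x y : vec x y 0 ord0 = x. Proof. by rewrite mxE. Qed.
Lemma vec1 x y : vec x y 0 ord_max = y. Proof. by rewrite mxE. Qed.

Lemma vec_eta (u : 'rV[K]_2) : u = vec (u 0 ord0) (u 0 ord_max).
Proof.
apply/rowP => j; case: (ord2P j) => ->; by rewrite ?vec0 ?vec1.
Qed.

Lemma vecE (u : 'rV[K]_2) x y : u 0 ord0 = x -> u 0 ord_max = y -> u = vec x y.
Proof. by move=> <- <-; apply: vec_eta. Qed.

Lemma evo_iso_of (al al' : K) (p q : K -> K -> K) :
  (forall a x y z w, p (a * x + y) (a * z + w) = a * p x z + p y w) ->
  (forall a x y z w, q (a * x + y) (a * z + w) = a * q x z + q y w) ->
  (exists p' q' : K -> K -> K, forall x y, p' (p x y) (q x y) = x /\ q' (p x y) (q x y) = y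
     /\ p (p' x y) (q' x y) = x /\ q (p' x y) (q' x y) = y) ->
  (forall x y z w, p (al * y * w) (x * z) = al' * q x y * q z w /\
                   q (al * y * w) (x * z) = p x y * p z w) ->
  evo_iso (A2_struct al) (A2_struct al').
Proof.
move=> lp lq [p' [q' inv]] hm.
exists (fun u : 'rV[K]_2 => vec (p (u 0 ord0) (u 0 ord_max)) (q (u 0 ord0) (u 0 ord_max))).
split.
- move=> a u v; apply/rowP => j; case: (ord2P j) => ->;
  rewrite !mxE /= ?lp ?lq //; exact: 0.
- exists (fun u : 'rV[K]_2 => vec (p' (u 0 ord0) (u 0 ord_max)) (q' (u 0 ord0) (u 0 ord_max))).
  + move=> u; rewrite !vec0 !vec1; have [-> [-> _]] := inv (u 0 ord0) (u 0 ord_max).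
    by rewrite -vec_eta.
  + move=> u; rewrite !vec0 !vec1; have [_ [_ [-> ->]]] := inv (u 0 ord0) (u 0 ord_max).
    by rewrite -vec_eta.
- move=> u v; rewrite em0 em1; symmetry; apply: vecE; rewrite ?em0 ?em1 ?vec0 ?vec1;
  case: (hm (u 0 ord0) (u 0 ord_max) (v 0 ord0) (v 0 ord_max)) => h1 h2; by rewrite ?h1 ?h2.
Qed.

Lemma alg_fwd (al al' a0 a1 b0 b1 : K) : al' != 0 ->
  al' * a1 * b1 = 0 -> a0 * b0 = 0 -> b0 = al' * a1 * a1 -> b1 = a0 * a0 ->
  al * a0 = al' * b1 * b1 -> al * a1 = b0 * b0 -> (a0 != 0) || (a1 != 0) ->
  G3_eq al al' \/ G3_eq al (al' ^+ 2).
Proof.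
move=> ha' E1 E2 E3 E4 E5 E6 nz.
have [a00|a0n] := eqVneq a0 0.
- rewrite a00 eqxx /= in nz; right; exists a1; split => //.
  apply: (mulIf nz); rewrite E6 E3; ring.
- left; exists a0; split => //.
  apply: (mulIf a0n); rewrite E5 E4; ring.
Qed.

Lemma fwd (al al' : K) : al' != 0 ->
  evo_iso (A2_struct al) (A2_struct al') -> G3_eq al al' \/ G3_eq al (al' ^+ 2).
Proof.
move=> ha' [f [lin bij hm]].
have f0 : f 0 = 0.
  have := lin 1 0 0; rewrite !scale1r addr0 => h.
  by apply: (addrI (f 0)); rewrite addr0 -h.
set e0 := vec 1 0; set e1 := vec 0 1.
have m01 : evo_mul (A2_struct al) e0 e1 = 0.
  by apply/rowP => j; case: (ord2P j) => ->; rewrite /e0 /e1 ?em0 ?em1 ?vec0 ?vec1 ?mxE ?vec0 ?vec1; ring.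
have m00 : evo_mul (A2_struct al) e0 e0 = e1.
  by apply/rowP => j; case: (ord2P j) => ->; rewrite /e0 /e1 ?em0 ?em1 ?vec0 ?vec1; ring.
have m11 : evo_mul (A2_struct al) e1 e1 = al *: e0.
  by apply/rowP => j; case: (ord2P j) => ->; rewrite /e0 /e1 ?em0 ?em1 ?mxE /=; ring.
have H1 := hm e0 e1; rewrite m01 f0 in H1.
have H2 := hm e0 e0; rewrite m00 in H2.
have H3 := hm e1 e1; rewrite m11 -[al *: e0]addr0 lin f0 addr0 in H3.
set a := f e0 in H1 H2 H3; set b := f e1 in H1 H2 H3.
have anz : (a 0 ord0 != 0) || (a 0 ord_max != 0).
  case: (eqVneq (a 0 ord0) 0) => [h0|//]; case: (eqVneq (a 0 ord_max) 0) => [h1|]; last by rewrite orbT.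
  have : a = f 0 by rewrite f0; apply/rowP => j; case: (ord2P j) => ->; rewrite !mxE.
  move/(bij_inj bij) => /(congr1 (fun M : 'rV[K]_2 => M 0 ord0)); rewrite vec0 mxE.
  by move/eqP; rewrite oner_eq0.
apply: (@alg_fwd al al' (a 0 ord0) (a 0 ord_max) (b 0 ord0) (b 0 ord_max) ha' _ _ _ _ _ _ anz).
- by have := congr1 (fun M : 'rV[K]_2 => M 0 ord0) H1; rewrite em0 mxE => /esym.
- by have := congr1 (fun M : 'rV[K]_2 => M 0 ord_max) H1; rewrite em1 mxE => /esym.
- by rewrite H2 em0.
- by rewrite H2 em1.
- by have := congr1 (fun M : 'rV[K]_2 => M 0 ord0) H3; rewrite em0 !mxE.
- by have := congr1 (fun M : 'rV[K]_2 => M 0 ord_max) H3; rewrite em1 !mxE.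
Qed.

End S.

Theorem lemma3p3 (K : fieldType) (alpha alpha' : K) :
  alpha != 0 -> alpha' != 0 ->
  (evo_iso (A2_struct alpha) (A2_struct alpha') <->
   (G3_eq alpha alpha' \/ G3_eq alpha (alpha' ^+ 2))).
Proof.
move=> ha ha'; split.
- exact: fwd.
- case=> [[c [hc ->]]|[c [hc ->]]].
  + apply: (@evo_iso_of _ _ _ (fun x y => c * x) (fun x y => c ^+ 2 * y)).
    * move=> *; ring.
    * move=> *; ring.
    * exists (fun x y => c^-1 * x), (fun x y => (c ^+ 2)^-1 * y) => x y.
      by do ![split]; field; rewrite ?expf_neq0 ?mulf_neq0.
    * move=> *; split; ring.
  + apply: (@evo_iso_of _ _ _ (fun x y => alpha' * c ^+ 2 * y) (fun x y => c * x)).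
    * move=> *; ring.
    * move=> *; ring.
    * exists (fun x y => c^-1 * y), (fun x y => (alpha' * c ^+ 2)^-1 * x) => x y.
      by do ![split]; field; rewrite ?hc ?ha'.
    * move=> *; split; ring.
Qed.
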